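(* Assume (A1)–(A3). Let $[s,e]$ contain exactly one true change point $\tau_k$, with $s\le\tau_k<e$, and set $n_1=\tau_k-s+1$, $n_2=e-\tau_k$, $n=n_1+n_2$, $\rho=n_1n_2/n$. Then \[ C(s,e)-C(s,\tau_k)-C(\tau_k+1,e)\ge \rho\,\Delta_k^2-\Bigl((4m+2)M+\frac{(2m^2+2m)M}{n}\Bigr). \] If in addition $n_1\ge\ell_T/2$ and $n_2\ge\ell_T/2$, where $\ell_T=\min_{1\le j\le K+1}(\tau_j-\tau_{j-1})$, then \[ C(s,e)-C(s,\tau_k)-C(\tau_k+1,e)\ge \frac{\Delta_\star^2}{4}\ell_T-\Bigl((4m+2)M+\frac{(2m^2+2m)M}{\ell_T}\Bigr). \]
   Context: Let $Y_1,\dots,Y_T$ be random vectors in $\mathbb R^d$ with true change points $0=\tau_0<\tau_1<\dots<\tau_K<\tau_{K+1}=T$. Let $k:\mathbb R^d\times\mathbb R^d\to\mathbb R$ be a positive definite kernel with RKHS $\mathcal H$ and feature map $\phi(y)=k(y,\cdot)$; for a distribution $P$ let $\mu_P=\mathbb E_{Y\sim P}\phi(Y)\in\mathcal H$. For $1\le s\le e\le T$ define $\widehat C(s,e)=\sum_{t=s}^e k(Y_t,Y_t)-\frac{1}{e-s+1}\sum_{i=s}^e\sum_{j=s}^e k(Y_i,Y_j)$ and $C(s,e)=\mathbb E[\widehat C(s,e)]$. (A1) For a fixed integer $m\ge0$, $(Y_t)$ is $m$-dependent: for every $t$, $(Y_1,\dots,Y_t)$ is independent of $(Y_{t+m+1},\dots,Y_T)$;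 for each $k=1,\dots,K+1$, $(Y_t)_{\tau_{k-1}<t\le\tau_k}$ is strictly stationary with marginal $P_k$. (A2) $k$ is bounded and characteristic, $0\le k(x,y)\le M<\infty$. (A3) $\Delta_k^2:=\|\mu_{P_k}-\mu_{P_{k+1}}\|_{\mathcal H}^2>0$ for $k=1,\dots,K$, and $\Delta_\star^2:=\min_k\Delta_k^2>0$. *)

(* Defs.v *)
From HB Require Import structures.
From mathcomp Require Import all_boot all_order all_algebra.
From mathcomp Require Import all_classical all_reals all_analysis.
Set Implicit Arguments. Unset Strict Implicit. Unset Printing Implicit Defensive.
Import Order.TTheory GRing.Theory Num.Theory.
Local Open Scope classical_set_scope.
Local Open Scope ring_scope.

(* Observation space R^d is modelled as [dd.-tuple R] with the product
   (= Borel) sigma-algebra generated by the coordinate maps. *)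

Section defs.
Context {R : realType} {dd : nat}.
Local Notation X := (dd.-tuple R).

Definition pos_def_kernel (k : X -> X -> R) : Prop :=
  (forall x y, k x y = k y x) /\
  (forall (n : nat) (x : 'I_n -> X) (c : 'I_n -> R),
      0 <= \sum_(i < n) \sum_(j < n) c i * c j * k (x i) (x j)).

Definition mean_emb (k : X -> X -> R) (P : probability X R) : X -> R :=
  fun y => Rintegral P setT (fun x => k x y).

Definition characteristic (k : X -> X -> R) : Prop :=
  forall P Q : probability X R, mean_emb k P = mean_emb k Q ->
    forall A, measurable A -> P A = Q A.

(* ||mu_P - mu_Q||_H^2 = <mu_P,mu_P> + <mu_Q,mu_Q> - 2 <mu_P,mu_Q>,
   with <mu_P,mu_Q>_H = \int\int k dP dQ (reproducing property). *)
Definition mmd2 (k : X -> X -> R) (P Q : probability X R) : R :=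
  Rintegral P setT (fun x => Rintegral P setT (fun y => k x y))
  + Rintegral Q setT (fun x => Rintegral Q setT (fun y => k x y))
  - 2 * Rintegral P setT (fun x => Rintegral Q setT (fun y => k x y)).

Context {dO : measure_display} {Omega : measurableType dO}.

Definition Chat (k : X -> X -> R) (Y : nat -> Omega -> X) (s e : nat)
  : Omega -> R := fun w =>
  \sum_(s <= t < e.+1) k (Y t w) (Y t w)
  - (e - s + 1)%N%:R^-1 * \sum_(s <= i < e.+1) \sum_(s <= j < e.+1) k (Y i w) (Y j w).

Definition Cexp (P : probability Omega R) (k : X -> X -> R)
  (Y : nat -> Omega -> X) (s e : nat) : R :=
  Rintegral P setT (Chat k Y s e).

Definition sig_gen (Y : nat -> Omega -> X) (I : set nat) : set (set Omega) :=
  <<s [set B | exists i, I i /\ exists A, measurable A /\ B = Y i @^-1` A] >>.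

Definition indep_sigma (P : probability Omega R) (F G : set (set Omega)) : Prop :=
  forall E1 E2, F E1 -> G E2 -> P (E1 `&` E2) = (P E1 * P E2)%E.

Definition m_dependent (P : probability Omega R) (Y : nat -> Omega -> X)
  (T m : nat) : Prop :=
  forall t, indep_sigma P (sig_gen Y [set i | (1 <= i <= t)%N])
                          (sig_gen Y [set i | (t + m + 1 <= i <= T)%N]).

Definition stationary_on (P : probability Omega R) (Y : nat -> Omega -> X)
  (a b : nat) : Prop :=
  forall (n : nat) (ts : 'I_n -> nat) (h : nat) (A : 'I_n -> set X),
    (forall i, (a < ts i)%N /\ (ts i + h <= b)%N) ->
    (forall i, measurable (A i)) ->
    P (\bigcap_(i in [set: 'I_n]) (Y (ts i) @^-1` A i)) =
    P (\bigcap_(i in [set: 'I_n]) (Y (ts i + h)%N @^-1` A i)).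

Definition marginal_on (P : probability Omega R) (Y : nat -> Omega -> X)
  (a b : nat) (Q : probability X R) : Prop :=
  forall t, (a < t <= b)%N -> forall A, measurable A -> P (Y t @^-1` A) = Q A.

End defs.

Definition Delta_star2 {R : realType} (Delta2 : nat -> R) (K : nat) : R :=
  \big[Num.min/Delta2 1%N]_(1 <= j < K.+1) Delta2 j.

Definition ell_T (tau : nat -> nat) (K T : nat) : nat :=
  \big[minn/T]_(1 <= j < K.+2) (tau j - tau j.-1)%N.

(* Main.v *)
Require Import Defs.
From HB Require Import structures.
From mathcomp Require Import all_boot all_order all_algebra.
From mathcomp Require Import all_classical all_reals all_analysis.
From mathcomp Require Import measurable_realfun.
From mathcomp Require Import ring lra zify.
Import Order.TTheory GRing.Theory Num.Theory.
Local Open Scope classical_set_scope.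
Local Open Scope ring_scope.

Section gen.
Context (R : realType) (d : measure_display) (T : measurableType d).

Lemma int_bnd (mu : probability T R) (f : T -> R) (C : R) :
  measurable_fun setT f -> (forall x, `|f x| <= C) ->
  mu.-integrable setT (EFin \o f).
Proof.
move=> mf fC; apply/integrableP; split; first exact/measurable_EFinP.
apply: (@le_lt_trans _ _ (\int[mu]_(x in setT) (cst C%:E) x)%E).
  apply: ge0_le_integral => //.
  - exact: (measurableT_comp (@abse_measurable R setT) (proj2 (measurable_EFinP _ _) mf)).
  - by move=> x _ /=; rewrite lee_fin.
rewrite integral_cst //; apply: (@le_lt_trans _ _ (C%:E * 1)%E); last by rewrite mule1 ltry.
by rewrite le_eqVlt; apply/orP; left; apply/eqP; congr (_ * _)%E; exact: probability_setT.
Qed.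

Lemma eint_bnd (mu : probability T R) (f : T -> \bar R) (C : R) :
  measurable_fun setT f -> (forall x, (0 <= f x <= C%:E)%E) ->
  (0 <= \int[mu]_(x in setT) f x <= C%:E)%E.
Proof.
move=> mf fC; apply/andP; split.
  by apply: integral_ge0 => x _; case/andP: (fC x).
apply: (@le_trans _ _ (\int[mu]_(x in setT) (cst C%:E) x)%E).
  apply: ge0_le_integral => //.
  - by move=> x _; case/andP: (fC x).
  - by move=> x _; case/andP: (fC x).
rewrite integral_cst //; apply: (@le_trans _ _ (C%:E * 1)%E); last by rewrite mule1.
by rewrite le_eqVlt; apply/orP; left; apply/eqP; congr (_ * _)%E; exact: probability_setT.
Qed.

Lemma Rint_bnd (mu : probability T R) (f : T -> R) (C : R) :
  measurable_fun setT f -> (forall x, 0 <= f x <= C) ->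
  0 <= Rintegral mu setT f <= C.
Proof.
move=> mf fC.
have /andP[h1 h2] := @eint_bnd mu (EFin \o f) C (proj2 (measurable_EFinP _ _) mf)
  ltac:(by move=> x /=; rewrite !lee_fin). rewrite /Rintegral; apply/andP; split.
  exact: fine_ge0.
have fn : (\int[mu]_(x in setT) (EFin \o f) x)%E \is a fin_num.
  by rewrite ge0_fin_numE // (le_lt_trans h2) // ltry.
by rewrite -lee_fin fineK.
Qed.

Lemma Rint_sum (mu : probability T R) (I : Type) (r : seq I) (F : I -> T -> R) :
  (forall i, mu.-integrable setT (EFin \o F i)) ->
  Rintegral mu setT (fun w => \sum_(i <- r) F i w) = \sum_(i <- r) Rintegral mu setT (F i).
Proof.
move=> Fi; elim: r => [|i r IH].
  rewrite big_nil (eq_Rintegral _ (g := fun=> 0)); last by move=> x _; rewrite big_nil.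
  by rewrite Rintegral_cst // mul0r.
rewrite big_cons -IH -RintegralD //.
  by apply: eq_Rintegral => x _; rewrite big_cons.
apply: (eq_integrable _ (fun x => \sum_(j <- r) (EFin \o F j) x)%E) => //.
  by move=> x _ /=; rewrite sumEFin.
by apply: integrable_sum => //.
Qed.

Lemma int_sum (mu : probability T R) (I : Type) (r : seq I) (F : I -> T -> R) :
  (forall i, mu.-integrable setT (EFin \o F i)) ->
  mu.-integrable setT (EFin \o (fun w => \sum_(i <- r) F i w)).
Proof.
move=> Fi.
apply: (eq_integrable _ (fun x => \sum_(j <- r) (EFin \o F j) x)%E) => //.
  by move=> x _ /=; rewrite sumEFin.
by apply: integrable_sum => //.
Qed.
End gen.

Section indep.
Context (R : realType) (dd : nat) (dO : measure_display) (Omega : measurableType dO)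
  (P : probability Omega R) (Y : nat -> Omega -> dd.-tuple R)
  (T m : nat) (k : dd.-tuple R -> dd.-tuple R -> R) (M : R).
Hypothesis HYmeas : forall t, measurable_fun setT (Y t).
Hypothesis Hmdep : m_dependent P Y T m.
Hypothesis Hkmeas : measurable_fun [set: dd.-tuple R * dd.-tuple R] (fun p => k p.1 p.2).
Hypothesis HkM : forall x y, 0 <= k x y <= M.

Local Notation X := (dd.-tuple R).

Lemma kY_meas i j : measurable_fun setT (fun w => k (Y i w) (Y j w)).
Proof. exact: (measurableT_comp Hkmeas (measurable_fun_pair (HYmeas i) (HYmeas j))). Qed.

Lemma kx_meas x : measurable_fun setT (fun y => k x y).
Proof. exact: (measurable_fun_pair2 x Hkmeas). Qed.

Lemma kE_meas : measurable_fun setT (fun p : X * X => (k p.1 p.2)%:E).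
Proof. exact: (measurableT_comp (@EFin_measurable R setT) Hkmeas). Qed.

Lemma inner_fin (Q : probability X R) x :
  (\int[Q]_(y in setT) (k x y)%:E)%E \is a fin_num.
Proof.
have /andP[h1 h2] := @eint_bnd R _ X Q (fun y => (k x y)%:E) M
  (proj2 (measurable_EFinP _ _) (kx_meas x)) ltac:(by move=> y; rewrite !lee_fin).
by rewrite ge0_fin_numE // (le_lt_trans h2) // ltry.
Qed.

Lemma iint_bnd (Q1 Q2 : probability X R) :
  0 <= Rintegral Q1 setT (fun x => Rintegral Q2 setT (fun y => k x y)) <= M.
Proof.
apply: Rint_bnd; last first.
  by move=> x; apply: Rint_bnd => //; exact: kx_meas.
have mF := @measurable_fun_fubini_tonelli_F _ _ X X R Q2 _ kE_meas
   ltac:(by move=> p; rewrite lee_fin; case/andP: (HkM p.1 p.2)).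
have H := measurableT_comp (@fine_measurable R setT measurableT) mF. exact H.
Qed.

Lemma indep_pair i j (Q1 Q2 : probability X R) :
  (1 <= i)%N -> (i + m < j)%N -> (j <= T)%N ->
  (forall A, measurable A -> P (Y i @^-1` A) = Q1 A) ->
  (forall A, measurable A -> P (Y j @^-1` A) = Q2 A) ->
  Rintegral P setT (fun w => k (Y i w) (Y j w)) =
  Rintegral Q1 setT (fun x => Rintegral Q2 setT (fun y => k x y)).
Proof.
move=> i1 ij jT HQ1 HQ2.
pose f := fun w => (Y i w, Y j w).
have mf : measurable_fun setT f := measurable_fun_pair (HYmeas i) (HYmeas j).
have prodE : forall Z, measurable Z -> (Q1 \x Q2)%E Z = pushforward P f Z.
  apply: (@product_measure_unique _ _ X X R Q1 Q2 (pushforward P f)) => //.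
  move=> A B mA mB; change (P (f @^-1` (A `*` B)) = (Q1 A * Q2 B)%E).
  have -> : f @^-1` (A `*` B) = Y i @^-1` A `&` Y j @^-1` B.
    by apply/seteqP; split => w.
  rewrite (Hmdep i) ?HQ1 ?HQ2 //.
    apply: sub_gen_smallest; exists i; split; first by rewrite /= leqnn i1.
    by exists A.
  apply: sub_gen_smallest; exists j; split.
    by rewrite /= jT andbT addn1.
  by exists B.
have kE0 : forall p : X * X, (0 <= (k p.1 p.2)%:E)%E.
  by move=> p; rewrite lee_fin; case/andP: (HkM p.1 p.2).
rewrite /Rintegral; congr fine.
transitivity (\int[Q1 \x Q2]_(p in setT) (k p.1 p.2)%:E)%E.
  rewrite (eq_measure_integral (pushforward P f)); last first.
    by move=> A mA _; exact: prodE.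
  by rewrite ge0_integral_pushforward //; exact: kE_meas.
rewrite fubini_tonelli1 //.
apply: eq_integral => x _; rewrite fineK //; first exact: inner_fin.
exact: kE_meas.
Qed.
End indep.
Lemma count_ind lo hi a b :
  (\sum_(lo <= j < hi) ((a <= j) && (j < b) : nat) <= b - a)%N.
Proof.
suff H : (\sum_(lo <= j < hi) ((a <= j) && (j < b) : nat) <= minn hi b - a)%N.
  apply: (leq_trans H); lia.
elim: hi => [|hi IH]; first by rewrite big_geq.
case: (leqP lo hi) => lh; last by rewrite big_geq.
rewrite big_nat_recr //=.
case: (leqP a hi) => ah; case: (ltnP hi b) => hb /=; lia.
Qed.
Lemma bigmin_le (R : realDomainType) (F : nat -> R) x0 (r : seq nat) i :
  i \in r -> \big[Num.min/x0]_(j <- r) F j <= F i.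
Proof.
elim: r => [|a r IH] //; rewrite in_cons big_cons => /orP[/eqP ->|ir].
  by rewrite ge_min lexx.
by rewrite ge_min IH ?orbT.
Qed.
Lemma final_alg (R : realFieldType) (n1 n2 a b c SAA SBB SAB SBA M m DA DB : R) :
  0 < n1 -> 0 < n2 -> 0 <= M -> 0 <= m ->
  n1 * n1 * a - M * n1 * (2 * m + 1) <= SAA ->
  n2 * n2 * b - M * n2 * (2 * m + 1) <= SBB ->
  SAB <= n1 * n2 * c + M * (m * m) ->
  SBA <= n1 * n2 * c + M * (m * m) ->
  n1 * n2 / (n1 + n2) * (a + b - 2 * c)
    - ((4 * m + 2) * M + (2 * m ^+ 2 + 2 * m) * M / (n1 + n2))
  <= (DA + DB - (n1 + n2)^-1 * (SAA + SAB + SBA + SBB))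
     - (DA - n1^-1 * SAA) - (DB - n2^-1 * SBB).
Proof.
move=> n10 n20 M0 m0 hAA hBB hAB hBA.
set n := n1 + n2.
have n0 : 0 < n by rewrite /n addr_gt0.
have -> : (DA + DB - n^-1 * (SAA + SAB + SBA + SBB)) - (DA - n1^-1 * SAA) - (DB - n2^-1 * SBB)
   = (n2 / (n * n1)) * SAA + (n1 / (n * n2)) * SBB - n^-1 * (SAB + SBA).
  rewrite /n; field; rewrite !lt0r_neq0 // ?addr_gt0 //.
have p0 : 0 <= n2 / (n * n1) by rewrite divr_ge0 ?mulr_ge0 ?ltW.
have q0 : 0 <= n1 / (n * n2) by rewrite divr_ge0 ?mulr_ge0 ?ltW.
have r0 : 0 <= n^-1 by rewrite invr_ge0 ltW.
have h1 := ler_wpM2l p0 hAA.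
have h2 := ler_wpM2l q0 hBB.
have h3 := ler_wpM2l r0 (lerD hAB hBA).
apply: (le_trans _ (lerB (lerD h1 h2) h3)).
have -> : n2 / (n * n1) * (n1 * n1 * a - M * n1 * (2 * m + 1)) +
  n1 / (n * n2) * (n2 * n2 * b - M * n2 * (2 * m + 1)) -
  n^-1 * (n1 * n2 * c + M * (m * m) + (n1 * n2 * c + M * (m * m)))
  = n1 * n2 / n * (a + b - 2 * c) - (2 * m + 1) * M - 2 * (m * m * M / n).
  rewrite /n; field; rewrite !lt0r_neq0 // ?addr_gt0 //.
have t1 : 0 <= m * M by rewrite mulr_ge0.
have t2 : 0 <= m * M / n by apply: divr_ge0 => //; exact: ltW.
have -> : (2 * m ^+ 2 + 2 * m) * M / n = 2 * (m * m * M / n) + 2 * (m * M / n).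
  rewrite /n; field; rewrite !lt0r_neq0 // ?addr_gt0 //.
lra.
Qed.
Lemma part2_alg (R : realFieldType) (n1 n2 l D Ds E0 X diff : R) :
  0 < l -> l / 2 <= n1 -> l / 2 <= n2 -> 0 < Ds -> Ds <= D -> 0 <= X ->
  n1 * n2 / (n1 + n2) * D - (E0 + X / (n1 + n2)) <= diff ->
  Ds / 4 * l - (E0 + X / l) <= diff.
Proof.
move=> l0 h1 h2 Ds0 DsD X0 H.
have n0 : 0 < n1 + n2 by lra.
have hrho : l / 4 <= n1 * n2 / (n1 + n2).
  rewrite ler_pdivlMr //; nra.
have hX : X / (n1 + n2) <= X / l.
  apply: ler_wpM2l => //; rewrite lef_pV2 ?posrE //; lra.
have hD : l / 4 * Ds <= n1 * n2 / (n1 + n2) * D.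
  apply: (le_trans (ler_wpM2r (ltW Ds0) hrho)).
  apply: ler_wpM2l => //; lra.
lra.
Qed.
Section sums.
Context (R : realFieldType).

Lemma sum_lower (lo hi : nat) (F : nat -> nat -> R) (a M : R)
    (cl : nat -> nat -> nat) (B : nat) :
  0 <= M ->
  (forall i j, (lo <= i < hi)%N -> (lo <= j < hi)%N -> a - M * (cl i j)%:R <= F i j) ->
  (forall i, (lo <= i < hi)%N -> (\sum_(lo <= j < hi) cl i j <= B)%N) ->
  (hi - lo)%:R * (hi - lo)%:R * a - M * (hi - lo)%:R * B%:R
    <= \sum_(lo <= i < hi) \sum_(lo <= j < hi) F i j.
Proof.
move=> M0 hF hB.
apply: (@le_trans _ _ (\sum_(lo <= i < hi) ((hi - lo)%:R * a - M * B%:R))).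
  rewrite sumr_const_nat -mulr_natr le_eqVlt; apply/orP; left; apply/eqP; ring.
apply: ler_sum_nat => i hi'.
apply: (@le_trans _ _ (\sum_(lo <= j < hi) (a - M * (cl i j)%:R))); last first.
  by apply: ler_sum_nat => j hj; exact: hF.
rewrite sumrB sumr_const_nat -mulr_sumr -natr_sum mulr_natl.
apply: lerB => //; apply: ler_wpM2l => //; rewrite ler_nat; exact: hB.
Qed.

Lemma sum_upper (lo mid hi : nat) (F : nat -> nat -> R) (c M : R)
    (I J : nat -> nat) (B1 B2 : nat) :
  0 <= M ->
  (forall i j, (lo <= i < mid)%N -> (mid <= j < hi)%N ->
     F i j <= c + M * (I i)%:R * (J j)%:R) ->
  (\sum_(lo <= i < mid) I i <= B1)%N -> (\sum_(mid <= j < hi) J j <= B2)%N ->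
  \sum_(lo <= i < mid) \sum_(mid <= j < hi) F i j
    <= (mid - lo)%:R * (hi - mid)%:R * c + M * (B1%:R * B2%:R).
Proof.
move=> M0 hF h1 h2.
apply: (@le_trans _ _ (\sum_(lo <= i < mid) \sum_(mid <= j < hi) (c + M * (I i)%:R * (J j)%:R))).
  apply: ler_sum_nat => i hi'; apply: ler_sum_nat => j hj; exact: hF.
have -> : \sum_(lo <= i < mid) \sum_(mid <= j < hi) (c + M * (I i)%:R * (J j)%:R)
   = (mid - lo)%:R * (hi - mid)%:R * c + M * ((\sum_(lo <= i < mid) I i)%:R * (\sum_(mid <= j < hi) J j)%:R).
  rewrite (_ : \sum_(lo <= i < mid) \sum_(mid <= j < hi) (c + M * (I i)%:R * (J j)%:R)
     = \sum_(lo <= i < mid) \sum_(mid <= j < hi) c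
       + \sum_(lo <= i < mid) \sum_(mid <= j < hi) (M * (I i)%:R * (J j)%:R)); last first.
    by rewrite -big_split /=; apply: eq_bigr => i _; rewrite big_split.
  congr (_ + _).
    under eq_bigr do rewrite sumr_const_nat.
    by rewrite sumr_const_nat -mulrnA -[LHS]mulr_natr natrM; ring.
  rewrite !natr_sum mulr_suml mulr_sumr.
  by apply: eq_bigr => i _; rewrite !mulr_sumr; apply: eq_bigr => j _; ring.
apply: lerD => //; apply: ler_wpM2l => //.
apply: ler_pM; rewrite ?ler0n ?ler_nat //.
Qed.
End sums.
Lemma sum_cat (R : realFieldType) (F : nat -> R) lo mid hi : (lo <= mid)%N -> (mid <= hi)%N ->
  \sum_(lo <= t < hi) F t = \sum_(lo <= t < mid) F t + \sum_(mid <= t < hi) F t.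
Proof. by move=> h1 h2; rewrite (@big_cat_nat _ _ _ mid). Qed.
Arguments sum_cat {R} F {lo mid hi}.
Lemma dbl (R : realFieldType) (E : nat -> nat -> R) lo mid hi : (lo <= mid)%N -> (mid <= hi)%N ->
  \sum_(lo <= i < hi) \sum_(lo <= j < hi) E i j =
  \sum_(lo <= i < mid) \sum_(lo <= j < mid) E i j + \sum_(lo <= i < mid) \sum_(mid <= j < hi) E i j
  + \sum_(mid <= i < hi) \sum_(lo <= j < mid) E i j + \sum_(mid <= i < hi) \sum_(mid <= j < hi) E i j.
Proof.
move=> h1 h2; rewrite (sum_cat _ h1 h2).
rewrite (eq_bigr _ (fun i _ => sum_cat (E i) h1 h2)).
rewrite [X in _ + X](eq_bigr _ (fun i _ => sum_cat (E i) h1 h2)).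
by rewrite !big_split /= !addrA.
Qed.
Lemma core (R : realFieldType) (E : nat -> nat -> R) (a b c M : R) (s tk e m : nat) :
  (s <= tk < e)%N -> 0 <= M ->
  (forall i j, E i j = E j i) -> (forall i j, 0 <= E i j <= M) ->
  0 <= a <= M -> 0 <= b <= M -> 0 <= c <= M ->
  (forall i j, (s <= i)%N -> (i + m < j)%N -> (j <= tk)%N -> E i j = a) ->
  (forall i j, (tk < i)%N -> (i + m < j)%N -> (j <= e)%N -> E i j = b) ->
  (forall i j, (s <= i)%N -> (i <= tk)%N -> (tk < j)%N -> (j <= e)%N -> (i + m < j)%N -> E i j = c) ->
  let n1 : R := (tk - s + 1)%:R in let n2 : R := (e - tk)%:R in
  ((n1 * n2 / (n1 + n2) * (a + b - 2 * c)
    - ((4 * m%:R + 2) * M + (2 * m%:R ^+ 2 + 2 * m%:R) * M / (n1 + n2))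
  <= (\sum_(s <= t < e.+1) E t t
       - (e - s + 1)%:R^-1 * \sum_(s <= i < e.+1) \sum_(s <= j < e.+1) E i j)
     - (\sum_(s <= t < tk.+1) E t t
       - (tk - s + 1)%:R^-1 * \sum_(s <= i < tk.+1) \sum_(s <= j < tk.+1) E i j)
     - (\sum_(tk.+1 <= t < e.+1) E t t
       - (e - tk.+1 + 1)%:R^-1 * \sum_(tk.+1 <= i < e.+1) \sum_(tk.+1 <= j < e.+1) E i j)) : Prop).
Proof.
move=> /andP[hstk htke] M0 Esym Ebnd ha hb hc farA farB farAB n1 n2.
have hAA : forall i j, (s <= i < tk.+1)%N -> (s <= j < tk.+1)%N ->
    a - M * ((((i - m <= j) && (j < i + m + 1))%N : nat))%:R <= E i j.
  move=> i j /andP[hi1 hi2] /andP[hj1 hj2].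
  case cl : ((i - m <= j) && (j < i + m + 1))%N.
    rewrite mulr1; case/andP: ha => ha1 ha2; case/andP: (Ebnd i j) => he1 he2; lra.
  rewrite mulr0 subr0.
  have [ij|ji] : (i + m < j)%N \/ (j + m < i)%N.
    by move/negbT: cl; rewrite negb_and -!ltnNge => /orP[h|h]; [right|left]; lia.
    by rewrite (farA i j hi1 ij ltac:(lia)).
  by rewrite Esym (farA j i hj1 ji ltac:(lia)).
have hBB : forall i j, (tk.+1 <= i < e.+1)%N -> (tk.+1 <= j < e.+1)%N ->
    b - M * ((((i - m <= j) && (j < i + m + 1))%N : nat))%:R <= E i j.
  move=> i j /andP[hi1 hi2] /andP[hj1 hj2].
  case cl : ((i - m <= j) && (j < i + m + 1))%N.
    rewrite mulr1; case/andP: hb => ha1 ha2; case/andP: (Ebnd i j) => he1 he2; lra.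
  rewrite mulr0 subr0.
  have [ij|ji] : (i + m < j)%N \/ (j + m < i)%N.
    by move/negbT: cl; rewrite negb_and -!ltnNge => /orP[h|h]; [right|left]; lia.
    by rewrite (farB i j hi1 ij ltac:(lia)).
  by rewrite Esym (farB j i hj1 ji ltac:(lia)).
have hAB : forall i j, (s <= i < tk.+1)%N -> (tk.+1 <= j < e.+1)%N ->
    E i j <= c + M * ((((tk.+1 - m <= i) && (i < tk.+1))%N : nat))%:R
                  * ((((tk.+1 <= j) && (j < tk.+1 + m))%N : nat))%:R.
  move=> i j /andP[hi1 hi2] /andP[hj1 hj2].
  case c1 : ((tk.+1 - m <= i) && (i < tk.+1))%N;
  case c2 : ((tk.+1 <= j) && (j < tk.+1 + m))%N.
  - rewrite !mulr1; case/andP: hc => ha1 ha2; case/andP: (Ebnd i j) => he1 he2; lra.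
  - have ij : (i + m < j)%N.
      by move/negbT: c2; rewrite negb_and -!ltnNge => /orP[h|h]; lia.
    rewrite (farAB i j hi1 ltac:(lia) hj1 ltac:(lia) ij) /=.
    lra.
  - have ij : (i + m < j)%N.
      by move/negbT: c1; rewrite negb_and -!ltnNge => /orP[h|h]; lia.
    rewrite (farAB i j hi1 ltac:(lia) hj1 ltac:(lia) ij) /=.
    lra.
  - have ij : (i + m < j)%N.
      by move/negbT: c1; rewrite negb_and -!ltnNge => /orP[h|h]; lia.
    rewrite (farAB i j hi1 ltac:(lia) hj1 ltac:(lia) ij) /=.
    lra.
have e0 : (tk.+1 - s = tk - s + 1)%N by lia.
have n1E : (tk.+1 - s)%:R = n1 by rewrite /n1 e0.
have n2E : (e.+1 - tk.+1)%:R = n2 by rewrite /n2 subSS.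
have mE : (2 * m + 1)%:R = 2 * m%:R + 1 :> R by rewrite natrD natrM.
have hSAA := @sum_lower R s tk.+1 E a M _ (2 * m + 1) M0 hAA
  ltac:(move=> i _; apply: leq_trans (count_ind _ _ _ _) _; lia).
rewrite n1E mE in hSAA.
have hSBB := @sum_lower R tk.+1 e.+1 E b M _ (2 * m + 1) M0 hBB
  ltac:(move=> i _; apply: leq_trans (count_ind _ _ _ _) _; lia).
rewrite n2E mE in hSBB.
have hSAB := @sum_upper R s tk.+1 e.+1 E c M _ _ m m M0 hAB
  ltac:(apply: leq_trans (count_ind _ _ _ _) _; lia)
  ltac:(apply: leq_trans (count_ind _ _ _ _) _; lia).
rewrite n1E n2E in hSAB.
have SBAE : \sum_(tk.+1 <= i < e.+1) \sum_(s <= j < tk.+1) E i j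
          = \sum_(s <= i < tk.+1) \sum_(tk.+1 <= j < e.+1) E i j.
  rewrite exchange_big; apply: eq_bigr => i _; apply: eq_bigr => j _; exact: Esym.
have hSBA := hSAB; rewrite -SBAE in hSBA.
have hA : (s <= tk.+1)%N by lia.
have hB : (tk.+1 <= e.+1)%N by lia.
have sd : \sum_(s <= t < e.+1) E t t = \sum_(s <= t < tk.+1) E t t + \sum_(tk.+1 <= t < e.+1) E t t
  := @sum_cat R (fun t => E t t) s tk.+1 e.+1 hA hB.
rewrite sd (@dbl R E s tk.+1 e.+1 hA hB).
have e1 : (e - s + 1 = tk - s + 1 + (e - tk))%N by lia.
have f1 : (e - s + 1)%:R = n1 + n2 :> R by rewrite /n1 /n2 e1 natrD.
have e3 : (e - tk.+1 + 1 = e - tk)%N by lia.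
have f3 : (e - tk.+1 + 1)%:R = n2 :> R by rewrite /n2 e3.
rewrite f1 f3 -/n1.
have n10 : 0 < n1 by rewrite /n1 ltr0n addn1.
have n20 : 0 < n2 by rewrite /n2 ltr0n subn_gt0.
have m0 : 0 <= m%:R :> R by rewrite ler0n.
have H := @final_alg R n1 n2 a b c _ _ _ _ M m%:R (\sum_(s <= t < tk.+1) E t t)
  (\sum_(tk.+1 <= t < e.+1) E t t) n10 n20 M0 m0 hSAA hSBB hSAB hSBA.
exact H.
Qed.
Theorem mainTheorem6
  (R : realType) (dd : nat) (dO : measure_display) (Omega : measurableType dO)
  (P : probability Omega R) (Y : nat -> Omega -> dd.-tuple R)
  (T K m : nat) (tau : nat -> nat) (Pk : nat -> probability (dd.-tuple R) R)
  (k : dd.-tuple R -> dd.-tuple R -> R) (M : R)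
  (* random vectors *)
  (HYmeas : forall t, measurable_fun setT (Y t))
  (* change points 0 = tau_0 < tau_1 < ... < tau_K < tau_{K+1} = T *)
  (Htau0 : tau 0%N = 0%N) (HtauT : tau K.+1 = T)
  (Htau_incr : forall j, (j <= K)%N -> (tau j < tau j.+1)%N)
  (* (A1) *)
  (Hmdep : m_dependent P Y T m)
  (Hstat : forall j, (1 <= j <= K.+1)%N ->
      stationary_on P Y (tau j.-1) (tau j) /\ marginal_on P Y (tau j.-1) (tau j) (Pk j))
  (* (A2) *)
  (Hkmeas : measurable_fun [set: dd.-tuple R * dd.-tuple R] (fun p => k p.1 p.2))
  (Hkpd : pos_def_kernel k) (Hkchar : characteristic k)
  (HkM : forall x y, 0 <= k x y <= M)
  (* (A3) *)
  (HDelta : forall j, (1 <= j <= K)%N -> 0 < mmd2 k (Pk j) (Pk j.+1))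
  (HDstar : 0 < Delta_star2 (fun j => mmd2 k (Pk j) (Pk j.+1)) K)
  (* the segment [s,e] contains exactly one change point tau_kk *)
  (kk s e : nat) (Hkk : (1 <= kk <= K)%N)
  (Hs : (1 <= s)%N) (He : (e <= T)%N)
  (Hse : (s <= tau kk < e)%N)
  (Hone : forall j, (1 <= j <= K)%N -> (s <= tau j <= e)%N -> j = kk) :
  let n1 : R := (tau kk - s + 1)%:R in
  let n2 : R := (e - tau kk)%:R in
  let n : R := n1 + n2 in
  let rho : R := n1 * n2 / n in
  let ell : R := (ell_T tau K T)%:R in
  let diffC : R := Cexp P k Y s e - Cexp P k Y s (tau kk) - Cexp P k Y (tau kk).+1 e in
  (rho * mmd2 k (Pk kk) (Pk kk.+1)
     - ((4 * m%:R + 2) * M + (2 * m%:R ^+ 2 + 2 * m%:R) * M / n) <= diffC)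
  /\
  (ell / 2 <= n1 -> ell / 2 <= n2 ->
     Delta_star2 (fun j => mmd2 k (Pk j) (Pk j.+1)) K / 4 * ell
     - ((4 * m%:R + 2) * M + (2 * m%:R ^+ 2 + 2 * m%:R) * M / ell) <= diffC).
Proof.
move=> n1 n2 n rho ell diffC.
have ksym := Hkpd.1.
pose x0 : dd.-tuple R := [tuple of nseq dd 0].
have M0 : 0 <= M by case/andP: (HkM x0 x0) => h1 h2; exact: le_trans h1 h2.
have ip := @indep_pair R dd dO Omega P Y T m k M HYmeas Hmdep Hkmeas HkM.
have ib := @iint_bnd R dd k M Hkmeas HkM.
have kYm : forall i j, measurable_fun setT (fun w => k (Y i w) (Y j w)) :=
  fun i j => @kY_meas R dd dO Omega Y k HYmeas Hkmeas i j.
pose E i j := Rintegral P setT (fun w => k (Y i w) (Y j w)).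
have Eint : forall i j, P.-integrable setT (EFin \o (fun w => k (Y i w) (Y j w))).
  move=> i j; apply: (@int_bnd R _ _ P _ M); first exact: kYm.
  by move=> w; case/andP: (HkM (Y i w) (Y j w)) => h1 h2; rewrite ger0_norm.
have Ebnd : forall i j, 0 <= E i j <= M.
  move=> i j; apply: Rint_bnd; [exact: kYm | move=> w; exact: HkM].
have Esym : forall i j, E i j = E j i.
  by move=> i j; apply: eq_Rintegral => w _; exact: ksym.
have CexpE : forall s' e', Cexp P k Y s' e' =
    \sum_(s' <= t < e'.+1) E t t
    - (e' - s' + 1)%:R^-1 * \sum_(s' <= i < e'.+1) \sum_(s' <= j < e'.+1) E i j.
  move=> s' e'; rewrite /Cexp /Chat.
  have I1 : forall i, P.-integrable setT (EFin \o (fun w => \sum_(s' <= j < e'.+1) k (Y i w) (Y j w))).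
    move=> i; exact: (@int_sum R _ _ P _ _ (fun j w => k (Y i w) (Y j w)) (fun j => Eint i j)).
  have I2 : P.-integrable setT (EFin \o (fun w => \sum_(s' <= i < e'.+1) \sum_(s' <= j < e'.+1) k (Y i w) (Y j w))).
    exact: (@int_sum R _ _ P _ _ (fun i w => \sum_(s' <= j < e'.+1) k (Y i w) (Y j w)) I1).
  have I3 : P.-integrable setT (EFin \o (fun w => \sum_(s' <= t < e'.+1) k (Y t w) (Y t w))).
    exact: (@int_sum R _ _ P _ _ (fun t w => k (Y t w) (Y t w)) (fun t => Eint t t)).
  rewrite (RintegralB (f1 := fun w => \sum_(s' <= t < e'.+1) k (Y t w) (Y t w))
    (f2 := fun w => (e' - s' + 1)%:R^-1 * \sum_(s' <= i < e'.+1) \sum_(s' <= j < e'.+1) k (Y i w) (Y j w))) //; last first.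
    apply: (eq_integrable measurableT _ _ _ (integrableZl measurableT ((e' - s' + 1)%:R^-1) I2)).
    by move=> x _ /=; rewrite EFinM.
  rewrite RintegralZl //.
  rewrite (@Rint_sum R _ _ P _ _ (fun t w => k (Y t w) (Y t w)) (fun t => Eint t t)).
  rewrite (@Rint_sum R _ _ P _ _ (fun i w => \sum_(s' <= j < e'.+1) k (Y i w) (Y j w)) I1).
  congr (_ - _ * _); apply: eq_bigr => i _.
  exact: (@Rint_sum R _ _ P _ _ (fun j w => k (Y i w) (Y j w)) (fun j => Eint i j)).
set tk := tau kk.
have hk1 : (1 <= kk)%N by case/andP: Hkk.
have hkK : (kk <= K)%N by case/andP: Hkk.
have hstk : (s <= tk)%N by case/andP: Hse.
have htke : (tk < e)%N by case/andP: Hse.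
have Hlo : (tau kk.-1 < s)%N.
  case: (ltnP (tau kk.-1) s) => // H; exfalso.
  have hinc := Htau_incr kk.-1 ltac:(lia).
  rewrite prednK // in hinc.
  case E0 : kk.-1 => [|j].
    by move: H; rewrite E0 Htau0; lia.
  have := Hone j.+1 ltac:(lia); rewrite -E0; move/(_ ltac:(apply/andP; split; lia)).
  lia.
have Hhi : (e <= tau kk.+1)%N.
  case: (leqP e (tau kk.+1)) => // H; exfalso.
  case: (ltnP kk K) => hk.
    have hinc := Htau_incr kk hkK.
    have := Hone kk.+1 ltac:(lia) ltac:(apply/andP; split; lia); lia.
  have kkK : kk = K by lia.
  by move: H; rewrite kkK HtauT; lia.
have margA : forall t, (s <= t <= tk)%N -> forall A, measurable A -> P (Y t @^-1` A) = Pk kk A.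
  move=> t ht; apply: (Hstat kk ltac:(lia)).2; lia.
have margB : forall t, (tk < t <= e)%N -> forall A, measurable A -> P (Y t @^-1` A) = Pk kk.+1 A.
  move=> t ht; apply: (Hstat kk.+1 ltac:(lia)).2; rewrite /=; lia.
pose a := Rintegral (Pk kk) setT (fun x => Rintegral (Pk kk) setT (fun y => k x y)).
pose b := Rintegral (Pk kk.+1) setT (fun x => Rintegral (Pk kk.+1) setT (fun y => k x y)).
pose c := Rintegral (Pk kk) setT (fun x => Rintegral (Pk kk.+1) setT (fun y => k x y)).
have farA : forall i j, (s <= i)%N -> (i + m < j)%N -> (j <= tk)%N -> E i j = a.
  move=> i j hi ij hj; apply: ip.
  - exact: leq_trans Hs hi.
  - exact: ij.
  - by clear -hj htke He; lia.
  - by apply: margA; clear -hi ij hj; lia.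
  - by apply: margA; clear -hi ij hj; lia.
have farB : forall i j, (tk < i)%N -> (i + m < j)%N -> (j <= e)%N -> E i j = b.
  move=> i j hi ij hj; apply: ip.
  - by clear -hi hstk Hs; lia.
  - exact: ij.
  - by clear -hj He; lia.
  - by apply: margB; clear -hi ij hj; lia.
  - by apply: margB; clear -hi ij hj; lia.
have farAB : forall i j, (s <= i)%N -> (i <= tk)%N -> (tk < j)%N -> (j <= e)%N -> (i + m < j)%N -> E i j = c.
  move=> i j hi hi2 hj1 hj2 ij; apply: ip.
  - exact: leq_trans Hs hi.
  - exact: ij.
  - by clear -hj2 He; lia.
  - by apply: margA; clear -hi hi2; lia.
  - by apply: margB; clear -hj1 hj2; lia.
have part1 : rho * mmd2 k (Pk kk) (Pk kk.+1)
    - ((4 * m%:R + 2) * M + (2 * m%:R ^+ 2 + 2 * m%:R) * M / n) <= diffC.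
  rewrite /diffC !CexpE.
  have H := @core R E a b c M s tk e m Hse M0 Esym Ebnd (ib _ _) (ib _ _) (ib _ _) farA farB farAB.
  exact H.
split; first exact: part1.
move=> h1 h2.
have tauj : forall j, (j <= K.+1)%N -> (j <= tau j)%N.
  elim => [|j IH] hj; first by [].
  have := Htau_incr j ltac:(clear -hj; lia); have := IH ltac:(clear -hj; lia).
  by clear; lia.
have T0 : (0 < T)%N.
  by rewrite -HtauT; have := tauj K.+1 (leqnn _); clear; lia.
have ellpos : (0 < ell_T tau K T)%N.
  rewrite /ell_T big_nat_cond; apply: (big_ind (fun x => 0 < x)%N) => //.
    by move=> x y hx hy; rewrite leq_min hx hy.
  move=> j /andP[/andP[j1 j2] _].
  have := Htau_incr j.-1 ltac:(clear -j1 j2; lia); rewrite prednK //.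
  by clear; lia.
have ell0 : 0 < ell by rewrite /ell ltr0n.
have DsD : Delta_star2 (fun j => mmd2 k (Pk j) (Pk j.+1)) K <= mmd2 k (Pk kk) (Pk kk.+1).
  rewrite /Delta_star2; apply: bigmin_le; rewrite mem_index_iota.
  by clear -Hkk; lia.
have m0 : 0 <= m%:R :> R by rewrite ler0n.
have X0 : 0 <= (2 * m%:R ^+ 2 + 2 * m%:R) * M.
  have mm : 0 <= m%:R ^+ 2 :> R by rewrite exprn_ge0.
  apply: mulr_ge0 => //; lra.
have H := @part2_alg R n1 n2 ell (mmd2 k (Pk kk) (Pk kk.+1))
  (Delta_star2 (fun j => mmd2 k (Pk j) (Pk j.+1)) K)
  ((4 * m%:R + 2) * M) ((2 * m%:R ^+ 2 + 2 * m%:R) * M) diffC ell0 h1 h2 HDstar DsD X0 part1.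
exact H.
Qed.
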